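(* For every $i\in\mathbb{N}$, the family $\{\mathrm{bit}_i:\mathbb{Z}_n\to\{-1,1\}\}_{n>2^i}$ is concentrated.
   Context: $\mathbb{Z}_n=\{0,\dots,n-1\}$ with addition mod $n$. For $x\in\mathbb{Z}_n$ write its binary expansion $x=\sum_{j\ge0}x_j2^j$ with $x_j\in\{0,1\}$; then $\mathrm{bit}_i(x)=(-1)^{x_i}$. For $f:\mathbb{Z}_n\to\mathbb{C}$: $\langle f,g\rangle=\frac1n\sum_x f(x)\overline{g(x)}$, $\|f\|_2^2=\langle f,f\rangle$, $\chi_\alpha(x)=\exp(2\pi i\alpha x/n)$, $\widehat f(\alpha)=\langle f,\chi_\alpha\rangle$, and $f|_\Gamma=\sum_{\alpha\in\Gamma}\widehat f(\alpha)\chi_\alpha$ for $\Gamma\subseteq\mathbb{Z}_n$. A family of functions $f_n:\mathbb{Z}_{n}\to\mathbb{C}$ (indexed by $n$) is concentrated if there is a bivariate polynomial $P\in\mathbb{R}[x,y]$ such that for every index $n$ and every $\epsilon>0$ there is $\Gamma_n\subseteq\mathbb{Z}_{n}$ with $|\Gamma_n|\le P(\log(n),1/\epsilon)$ and $\|f_n-f_n|_{\Gamma_n}\|_2^2<\epsilon$. *)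

(* Defs.v *)
From HB Require Import structures.
From mathcomp Require Import all_boot all_order all_algebra.
From mathcomp Require Import polyXY.
From mathcomp Require Import all_classical all_reals.
From mathcomp Require Import exp trigo.
From mathcomp Require Import complex.
Set Implicit Arguments. Unset Strict Implicit. Unset Printing Implicit Defensive.
Import Order.TTheory GRing.Theory Num.Theory.
Local Open Scope ring_scope.

Section Fourier.
Variable R : realType.
Local Notation C := R[i].

Definition bit (n i : nat) (x : 'I_n) : C :=
  if odd ((x : nat) %/ 2 ^ i) then -1 else 1.

Definition inner (n : nat) (f g : 'I_n -> C) : C :=
  (n%:R)^-1 * \sum_(x : 'I_n) f x * conjc (g x).

Definition l2normsq (n : nat) (f : 'I_n -> C) : C := inner f f.

Definition chi (n : nat) (alpha : 'I_n) (x : 'I_n) : C :=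
  let t := (2 * pi * (alpha : nat)%:R * (x : nat)%:R / n%:R : R) in
  (cos t +i* sin t)%C.

Definition fourier (n : nat) (f : 'I_n -> C) (alpha : 'I_n) : C :=
  inner f (chi alpha).

Definition frestrict (n : nat) (f : 'I_n -> C) (G : {set 'I_n}) : 'I_n -> C :=
  fun x => \sum_(alpha in G) fourier f alpha * chi alpha x.

End Fourier.

(* Main.v *)
Require Import Defs.
From HB Require Import structures.
From mathcomp Require Import all_boot all_order all_algebra.
From mathcomp Require Import polyXY.
From mathcomp Require Import all_classical all_reals.
From mathcomp Require Import exp trigo.
From mathcomp Require Import complex.
From mathcomp Require Import ring lra zify.
Import Order.TTheory GRing.Theory Num.Theory.
Local Open Scope ring_scope.
Section S.
Variable R : realType.
Local Notation C := R[i].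

Definition E (t : R) : C := (cos t +i* sin t)%C.

Lemma EM a b : E a * E b = E (a + b).
Proof. rewrite /E; simpc; rewrite cosD sinD; congr (_ +i* _)%C; ring. Qed.

Lemma EJ a : conjc (E a) = E (- a).
Proof. by rewrite /E cosN sinN. Qed.

Lemma E0 : E 0 = 1.
Proof. by rewrite /E cos0 sin0. Qed.

Lemma EX a k : E a ^+ k = E (a *+ k).
Proof.
elim: k => [|k IH]; first by rewrite expr0 mulr0n E0.
by rewrite exprS IH EM mulrS.
Qed.

Lemma E2pi k : E ((pi *+ 2) *+ k) = 1.
Proof.
elim: k => [|k IH]; first by rewrite mulr0n E0.
by rewrite mulrS -EM IH mulr1 /E cos2pi sin2pi.
Qed.

Lemma EEJ a : E a * conjc (E a) = 1.
Proof. by rewrite EJ EM subrr E0. Qed.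

Definition nm (z : C) : R := complex.Re `|z|.
Lemma nmE (z : C) : `|z| = (nm z)%:C%C.
Proof.
have h := @ger0_Im R _ (normr_ge0 z).
by rewrite /nm; move: h; case: `|z| => a b /= ->.
Qed.

Lemma nm_ge0 (z : C) : 0 <= nm z.
Proof. by rewrite -(@ler0c R) -nmE. Qed.

Lemma mulJ (z : C) : z * conjc z = `|z| ^+ 2.
Proof. case: z => a b. rewrite -(@add_Re2_Im2 R) /=. simpc. congr (_ +i* _)%C; ring. Qed.

Lemma normE a : `|E a| = 1.
Proof.
have : `|E a| ^+ 2 = 1 by rewrite -mulJ EEJ.
move/eqP; rewrite sqrf_eq1 => /orP[/eqP//|/eqP h].
by have := normr_ge0 (E a); rewrite h ler0N1.
Qed.

Lemma normE1 a : `|E a - 1| ^+ 2 = (2 - 2 * cos a)%:C%C.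
Proof.
rewrite -(@add_Re2_Im2 R) /E /=; congr (_ +i* _)%C.
have := cos2Dsin2 a; lra. 
Qed.


Lemma cos_le0 (t : R) : pi / 2 <= t <= pi *+ 3 / 2 -> cos t <= 0.
Proof.
move=> /andP[h1 h2].
have -> : t = (t - pi) + pi by rewrite subrK.
rewrite cosDpi oppr_le0; apply: cos_ge0_pihalf.
apply/andP; split.
- have : (pi : R) *+ 3 / 2 = pi + pi / 2 by field.
  lra.
- have : (pi : R) *+ 3 / 2 = pi + pi / 2 by field.
  lra.
Qed.

Lemma normXk (z : C) k : `|z| = 1 -> `|z ^+ k - 1| <= k%:R * `|z - 1|.
Proof.
move=> Hz; rewrite subrX1 normrM mulrC ler_wpM2r //.
apply: le_trans (ler_norm_sum _ _ _) _.
under eq_bigr do rewrite normrX Hz expr1n.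
by rewrite sumr_const card_ord.
Qed.

Lemma natC k : (k%:R : C) = (k%:R : R)%:C%C.
Proof. by rewrite rmorph_nat. Qed.

Lemma nm_le (x y : C) : `|x| <= `|y| -> nm x <= nm y.
Proof. by rewrite !nmE lecR. Qed.

Lemma lowE (n c : nat) : (0 < c)%N -> (c.*2 <= n)%N ->
  c%:R / n%:R <= nm (E (2 * pi * c%:R / n%:R) - 1).
Proof.
move=> c0 cn.
have n0 : (0 < n)%N by apply: leq_trans cn; rewrite -addnn ltn_addl.
set k := (n %/ (4 * c)).+1.
have H1 : (n < k * (4 * c))%N by apply: ltn_ceil; rewrite muln_gt0.
have H2 : (k * (4 * c) <= n + 4 * c)%N by have := leq_trunc_div n (4 * c); rewrite /k mulSn; lia.
have H3 : (k * (4 * c) <= 3 * n)%N.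
  apply: leq_trans H2 _. rewrite -addnn in cn. lia.
have R1 : (n%:R : R) < k%:R * (4 * c%:R) by rewrite -!natrM ltr_nat.
have R3 : k%:R * (4 * c%:R) <= 3 * (n%:R : R) by rewrite -!natrM ler_nat.
have n0R : (0 : R) < n%:R by rewrite ltr0n.
have k0R : (0 : R) < k%:R by rewrite ltr0n.
have pi0 := @pi_gt0 R.
set z := E _.
have zk : z ^+ k = E (2 * pi * (k%:R * c%:R / n%:R)).
  by rewrite /z EX -mulr_natr; congr E; field; rewrite lt0r_neq0.
have ct : cos (2 * (pi : R) * (k%:R * c%:R / n%:R)) <= 0.
  apply: cos_le0.
  set u := k%:R * c%:R / n%:R.
  have u1 : 1 / 4 <= u.
    rewrite /u ler_pdivlMr //; lra.
  have u2 : u <= 3 / 4.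
    rewrite /u ler_pdivrMr //; lra.
  have : 0 <= pi * (u - 1/4) by rewrite mulr_ge0 // ?subr_ge0 // ltW.
  have : 0 <= pi * (3/4 - u) by rewrite mulr_ge0 // ?subr_ge0 // ltW.
  have : (pi : R) *+ 3 / 2 = pi * 3 / 2 by rewrite mulr_natr.
  move=> e; rewrite e; move=> a b; apply/andP; split; lra.
have nk : 1 <= nm (z ^+ k - 1).
  have h : (2 : R) <= nm (z ^+ k - 1) ^+ 2.
    have := normE1 (2 * (pi : R) * (k%:R * c%:R / n%:R)).
    rewrite -zk nmE -rmorphXn /= => -[->]; lra.
  have := nm_ge0 (z ^+ k - 1); nra.
have nz : nm (z ^+ k - 1) <= k%:R * nm (z - 1).
  have := @normXk z k (normE (2 * pi * c%:R / n%:R)); rewrite !nmE natC -rmorphM /= lecR //.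
have N0 := nm_ge0 (z - 1).
rewrite ler_pdivrMr //.
have h1 : n%:R <= k%:R * nm (z - 1) * n%:R.
  by rewrite -{1}(mul1r n%:R); apply: ler_wpM2r; [exact: ltW | exact: le_trans nk nz].
have h2 : k%:R * c%:R <= k%:R * (nm (z - 1) * n%:R) by lra.
by rewrite ler_pM2l in h2.
Qed.


End S.

Section S2. Variable R : realType. Local Notation C := R[i].
Local Notation E := (@E R). Local Notation nm := (@nm R).
Lemma normJ (z : C) : `|conjc z| = `|z|.
Proof. case: z => a b. rewrite !(@normc_def R). simpl. rewrite sqrrN. done. Qed.

Lemma nmEN (t : R) : nm (E (- t) - 1) = nm (E t - 1).
Proof.
have -> : E (- t) - 1 = conjc (E t - 1).
  rewrite /E cosN sinN. simpc. done.
by rewrite /nm normJ.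
Qed.

Lemma nm0 : nm 0 = 0.
Proof. by rewrite /nm normr0. Qed.

Lemma lowE2 (n c : nat) : (0 < c)%N -> (c < n)%N ->
  (minn c (n - c))%:R / n%:R <= nm (E (2 * pi * c%:R / n%:R) - 1).
Proof.
move=> c0 cn.
have n0R : (0 : R) < n%:R by rewrite ltr0n (leq_ltn_trans _ cn).
case: (leqP c.*2 n) => h.
  have -> : minn c (n - c) = c by apply/minn_idPl; rewrite -addnn in h; lia.
  exact: lowE.
have -> : minn c (n - c) = (n - c)%N by apply/minn_idPr; rewrite -addnn in h; lia.
have -> : E (2 * pi * c%:R / n%:R) = E (- (2 * pi * (n - c)%:R / n%:R)).
  rewrite -[RHS]mulr1 -(@E2pi R 1) EM; congr E.
  rewrite natrB ?(ltnW cn) //; field; exact: lt0r_neq0.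
rewrite nmEN; apply: lowE; first lia.
rewrite -addnn in h; lia.
Qed.

Lemma chiE n (a x : 'I_n) : chi R a x = E (2 * pi * (a : nat)%:R * (x : nat)%:R / n%:R).
Proof. by []. Qed.

Lemma geo0 (z : C) n : z != 1 -> z ^+ n = 1 -> \sum_(x < n) z ^+ x = 0.
Proof.
move=> z1 zn; have := subrX1 z n; rewrite zn subrr => /esym/eqP.
by rewrite mulf_eq0 subr_eq0 (negbTE z1) /= => /eqP.
Qed.

Lemma orth n (a b : 'I_n) :
  \sum_(x : 'I_n) chi R a x * conjc (chi R b x) = if a == b then n%:R else 0.
Proof.
have n0 : (0 < n)%N by apply: leq_ltn_trans (ltn_ord a).
have n0R : (0 : R) < n%:R by rewrite ltr0n.
set t := 2 * (pi : R) * ((a : nat)%:R - (b : nat)%:R) / n%:R.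
have e : forall x : 'I_n, chi R a x * conjc (chi R b x) = E t ^+ x.
  move=> x; rewrite !chiE EJ EM EX; congr E.
  rewrite /t -mulr_natr; field; exact: lt0r_neq0.
under eq_bigr do rewrite e.
case: (a =P b) => [ab|/eqP ab].
  rewrite /t ab subrr mulr0 mul0r E0.
  under eq_bigr do rewrite expr1n.
  by rewrite sumr_const card_ord.
apply: geo0.
  have [c [c0 [cn hc]]] : exists c : nat, [/\ (0 < c)%N, (c < n)%N &
      nm (E t - 1) = nm (E (2 * pi * c%:R / n%:R) - 1)].
    have la := ltn_ord a; have lb := ltn_ord b.
    case: (ltngtP a b) => h; last by move: ab; rewrite (val_inj h) eqxx.
      exists (b - a)%N; split; [lia | lia |].
      rewrite -nmEN; congr (nm (E _ - 1)).
      rewrite /t natrB ?(ltnW h) //; field; exact: lt0r_neq0.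
    exists (a - b)%N; split; [lia | lia |].
    congr (nm (E _ - 1)).
    rewrite /t natrB ?(ltnW h) //.
  apply/eqP => h1.
  have := @lowE2 n c c0 cn; rewrite -hc h1 subrr nm0.
  rewrite ler_pdivrMr // mul0r => h2.
  have h3 : (0 : R) < (minn c (n - c))%:R by rewrite ltr0n; lia.
  lra.
rewrite EX.
have -> : t *+ n = (pi *+ 2) *+ a + - ((pi *+ 2) *+ b).
  rewrite /t; field; exact: lt0r_neq0.
by rewrite -EM -EJ !E2pi conjc1 mulr1.
Qed.

Lemma conjM (x y : C) : conjc (x * y) = conjc x * conjc y.
Proof. exact: rmorphM. Qed.
Lemma conjB (x y : C) : conjc (x - y) = conjc x - conjc y.
Proof. exact: rmorphB. Qed.
Lemma conjS (I : finType) (P : pred I) (F : I -> C) :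
  conjc (\sum_(i | P i) F i) = \sum_(i | P i) conjc (F i).
Proof. exact: rmorph_sum. Qed.
Lemma conjn k : conjc (k%:R : C) = k%:R.
Proof. exact: conjc_nat. Qed.
Lemma conjV (x : C) : conjc (x^-1) = (conjc x)^-1.
Proof. exact: conjc_inv. Qed.
Lemma conjK (x : C) : conjc (conjc x) = x.
Proof. exact: conjcK. Qed.
End S2.

Section S3. Variable R : realType. Local Notation C := R[i].
Local Notation E := (@E R). Local Notation nm := (@nm R).
Lemma chiC n (a x : 'I_n) : chi R a x = chi R x a.
Proof. rewrite !chiE; congr E; ring. Qed.

Lemma dual n (x y : 'I_n) :
  \sum_(a : 'I_n) chi R a y * conjc (chi R a x) = if y == x then n%:R else 0.
Proof. under eq_bigr do rewrite [chi R _ y]chiC [chi R _ x]chiC. exact: orth. Qed.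

Lemma sumF n (f : 'I_n -> C) a :
  \sum_x f x * conjc (chi R a x) = n%:R * fourier f a.
Proof.
have n0 : (0 < n)%N by apply: leq_ltn_trans (ltn_ord a).
by rewrite /fourier /inner mulrA divff ?mul1r // pnatr_eq0 -lt0n.
Qed.

Lemma fourier_mul n (f : 'I_n -> C) a (u : C) :
  fourier f a * u = \sum_x (n%:R)^-1 * (f x * conjc (chi R a x) * u).
Proof. by rewrite /fourier /inner -mulrA mulr_suml mulr_sumr. Qed.

Lemma inversion n (f : 'I_n -> C) x :
  \sum_a fourier f a * chi R a x = f x.
Proof.
have n0 : (0 < n)%N by apply: leq_ltn_trans (ltn_ord x).
have e1 : \sum_a fourier f a * chi R a x =
   \sum_a \sum_y (n%:R)^-1 * (f y * (chi R a x * conjc (chi R a y))).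
  apply: eq_bigr => a _; rewrite /fourier /inner -mulrA mulr_suml mulr_sumr.
  by apply: eq_bigr => y _; ring.
rewrite e1 exchange_big /=.
under eq_bigr do rewrite -mulr_sumr -mulr_sumr dual.
rewrite (bigD1 x) //= eqxx big1 ?addr0.
  by field; rewrite pnatr_eq0 -lt0n.
by move=> y yx; rewrite eq_sym (negbTE yx) !mulr0.
Qed.

Lemma parseval n (f : 'I_n -> C) :
  \sum_a fourier f a * conjc (fourier f a) =
  (n%:R)^-1 * \sum_x f x * conjc (f x).
Proof.
transitivity ((n%:R)^-1 * \sum_x f x * conjc (\sum_a fourier f a * chi R a x));
  last by under [in LHS]eq_bigr do rewrite inversion.
rewrite mulr_sumr.
under [in RHS]eq_bigr do rewrite conjS !mulr_sumr.
rewrite [in RHS]exchange_big /=.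
apply: eq_bigr => a _.
rewrite fourier_mul.
by apply: eq_bigr => x _; rewrite [conjc (_ * chi R _ _)]conjM; ring.
Qed.

Lemma residual n (f : 'I_n -> C) (G : {set 'I_n}) :
  l2normsq (fun x => f x - frestrict f G x) =
  (n%:R)^-1 * \sum_x f x * conjc (f x) -
  \sum_(a in G) fourier f a * conjc (fourier f a).
Proof.
case: n f G => [|n] f G.
  by rewrite /l2normsq /inner !big_ord0 subr0.
set h := frestrict f G.
set S := \sum_(a in G) fourier f a * conjc (fourier f a).
have nz : (n.+1%:R : C) != 0 by rewrite pnatr_eq0.
have F1 : \sum_x f x * conjc (h x) = n.+1%:R * S.
  rewrite /h /frestrict /S mulr_sumr.
  under eq_bigr do rewrite conjS mulr_sumr.
  rewrite exchange_big /=; apply: eq_bigr => a _.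
  rewrite [X in _ = X]mulrA [X in _ = X]mulrC -sumF mulr_sumr.
  by apply: eq_bigr => x _; rewrite [conjc (_ * chi R _ _)]conjM; ring.
have SJ : conjc S = S.
  rewrite /S conjS; apply: eq_bigr => a _; rewrite conjM conjK mulrC //.
have F2 : \sum_x h x * conjc (f x) = n.+1%:R * S.
  have := congr1 conjc F1; rewrite conjS conjM conjn SJ => <-.
  by apply: eq_bigr => x _; rewrite conjM conjK mulrC.
have F3 : \sum_x h x * conjc (h x) = n.+1%:R * S.
  rewrite /h /frestrict.
  under eq_bigr do rewrite conjS mulr_suml.
  under eq_bigr do under eq_bigr do rewrite mulr_sumr.
  rewrite exchange_big /=.
  under eq_bigr do rewrite exchange_big /=.
  rewrite /S mulr_sumr; apply: eq_bigr => a aG.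
  transitivity (\sum_(b in G) fourier f a * conjc (fourier f b) *
                 \sum_x chi R a x * conjc (chi R b x)).
    apply: eq_bigr => b _; rewrite mulr_sumr; apply: eq_bigr => x _.
    by rewrite conjM; ring.
  under eq_bigr do rewrite orth.
  rewrite (bigD1 a) //= eqxx big1 ?addr0; first by ring.
  by move=> b /andP[_ ba]; rewrite eq_sym (negbTE ba) mulr0.
rewrite /l2normsq /inner.
have e : forall x, (f x - h x) * conjc (f x - h x) =
  f x * conjc (f x) - f x * conjc (h x) - h x * conjc (f x) + h x * conjc (h x).
  by move=> x; rewrite conjB; ring.
under eq_bigr do rewrite e.
rewrite big_split /= !sumrB F1 F2 F3.
set T := \sum_x _.
rewrite !mulrDr !mulrN mulrA mulVf // mul1r; ring.
Qed.
End S3.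

Section S4. Variable R : realType. Local Notation C := R[i].
Local Notation E := (@E R). Local Notation nm := (@nm R).
Definition Fb (i y : nat) : C := if odd (y %/ 2 ^ i) then -1 else 1.

Lemma FbM i y : Fb i (y + 2 ^ i.+1) = Fb i y.
Proof.
by rewrite /Fb expnS addnC divnMDl ?expn_gt0 // oddD.
Qed.

Lemma normFb i y : `|Fb i y| = 1.
Proof. by rewrite /Fb; case: ifP; rewrite ?normrN normr1. Qed.

Lemma sum_block i (w : C) a m : `|w| = 1 ->
  `|\sum_(a <= y < a + m) Fb i y * w ^+ y| <= m%:R.
Proof.
move=> w1; apply: le_trans (ler_norm_sum _ _ _) _.
under eq_bigr do rewrite normrM normFb normrX w1 expr1n mulr1.
by rewrite sumr_const_nat addnC addnK.
Qed.

Lemma shift_ident i (w : C) n :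
  (w ^+ (2 ^ i.+1) - 1) * \sum_(0 <= y < n) Fb i y * w ^+ y =
  \sum_(n <= y < n + 2 ^ i.+1) Fb i y * w ^+ y -
  \sum_(0 <= y < 2 ^ i.+1) Fb i y * w ^+ y.
Proof.
set M := (2 ^ i.+1)%N.
set g := fun y => Fb i y * w ^+ y.
have e1 : w ^+ M * \sum_(0 <= y < n) g y = \sum_(M <= y < n + M) g y.
  rewrite -[X in _ = \sum_(X <= _ < _) _]add0n big_addn addnK mulr_sumr.
  by apply: eq_bigr => y _; rewrite /g FbM exprD; ring.
have e2 : \sum_(0 <= y < n + M) g y = \sum_(0 <= y < M) g y + \sum_(M <= y < n + M) g y.
  by rewrite -big_cat_nat // leq_addl.
have e3 : \sum_(0 <= y < n + M) g y = \sum_(0 <= y < n) g y + \sum_(n <= y < n + M) g y.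
  by rewrite -big_cat_nat // leq_addr.
rewrite mulrBl e1 mul1r.
have -> : \sum_(M <= y < n + M) g y = \sum_(0 <= y < n + M) g y - \sum_(0 <= y < M) g y.
  rewrite e2; ring.
rewrite e3; ring.
Qed.

Lemma nm_nat k : nm (k%:R) = k%:R.
Proof. by rewrite /nm normr_nat natC. Qed.

Lemma nmM (x y : C) : nm (x * y) = nm x * nm y.
Proof. by rewrite {1}/nm normrM !nmE /= mulr0 subr0. Qed.

Lemma coef_bound (i n : nat) (a : 'I_n) :
  let c := ((a : nat) * 2 ^ i.+1 %% n)%N in (0 < c)%N ->
  nm (fourier (@bit R n i) a) * (minn c (n - c))%:R <= 2 * (2 ^ i.+1)%N%:R.
Proof.
move=> c c0.
have n0 : (0 < n)%N by apply: leq_ltn_trans (ltn_ord a).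
have n0R : (0 : R) < n%:R by rewrite ltr0n.
set M := (2 ^ i.+1)%N.
set w := E (- (2 * (pi : R) * (a : nat)%:R / n%:R)).
have cj : forall x : 'I_n, conjc (chi R a x) = w ^+ x.
  move=> x; rewrite chiE EJ /w EX; congr E; field; exact: lt0r_neq0.
have eT : \sum_x @bit R n i x * conjc (chi R a x) = \sum_(0 <= y < n) Fb i y * w ^+ y.
  by rewrite big_mkord; apply: eq_bigr => x _; rewrite cj.
set T := \sum_(0 <= y < n) Fb i y * w ^+ y.
have w1 : `|w| = 1 by apply: normE.
have hT : `|(w ^+ M - 1) * T| <= (M + M)%:R.
  rewrite shift_ident natrD; apply: le_trans (ler_normB _ _) _.
  apply: lerD; first exact: sum_block.
  by have := @sum_block i w 0 M w1; rewrite add0n.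
have hw : nm (w ^+ M - 1) = nm (E (2 * pi * c%:R / n%:R) - 1).
  have dq := divn_eq ((a : nat) * M) n.
  set q := (((a : nat) * M) %/ n)%N in dq.
  have h : (a : nat)%:R * M%:R = q%:R * n%:R + c%:R :> R.
    by rewrite -!natrM -natrD -dq.
  rewrite /w EX.
  have -> : (- (2 * (pi : R) * (a : nat)%:R / n%:R)) *+ M =
            - (2 * pi * c%:R / n%:R) + - ((pi *+ 2) *+ q).
    rewrite -mulr_natr.
    transitivity (- (2 * (pi : R) / n%:R) * ((a : nat)%:R * M%:R)).
      field; exact: lt0r_neq0.
    rewrite h; field; exact: lt0r_neq0.
  rewrite -EM (_ : E (- ((pi *+ 2) *+ q)) = 1) ?mulr1 ?nmEN //.
  by rewrite -EJ E2pi conjc1.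
have lw := @lowE2 R n c c0 (ltn_pmod _ n0).
rewrite -hw in lw.
have hT' : nm (w ^+ M - 1) * nm T <= (M + M)%:R.
  by rewrite -nmM -nm_nat; apply: nm_le; rewrite normr_nat.
have hF : nm T = n%:R * nm (fourier (@bit R n i) a).
  by rewrite -nm_nat -nmM -sumF eT.
set F := nm (fourier _ a) in hF *.
set W := nm (w ^+ M - 1) in lw hT'.
set d := (minn c (n - c))%:R in lw *.
have F0 : 0 <= F by apply: nm_ge0.
have -> : F * d = (n%:R * F) * (d / n%:R) by field; exact: lt0r_neq0.
apply: le_trans (_ : (n%:R * F) * W <= _).
  by apply: ler_wpM2l => //; rewrite mulr_ge0 // ltW.
by rewrite -hF mulrC; apply: (le_trans hT'); rewrite natrD; lra.
Qed.
End S4.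

Section S5. Variable R : realType. Local Notation C := R[i].
Local Notation E := (@E R). Local Notation nm := (@nm R).
Lemma sum_inj (I J : finType) (g : I -> J) (h : J -> R) :
  injective g -> (forall j, 0 <= h j) ->
  \sum_(x : I) h (g x) <= \sum_(j : J) h j.
Proof.
move=> ginj h0.
rewrite (bigID (fun j => j \in g @: [set: I]%SET)) /=.
rewrite big_imset /=; last by move=> x y _ _; apply: ginj.
rewrite -[X in X <= _]addr0; apply: lerD; last by apply: sumr_ge0.
have -> : \sum_(x : I) h (g x) = \sum_(x in [set: I]%SET) h (g x).
  by apply: eq_bigl => x; rewrite finset.in_setT.
by [].
Qed.

Lemma fiber_sum (n M : nat) (h : nat -> R) : (0 < M)%N ->
  (forall j, 0 <= h j) ->
  \sum_(a : 'I_n) h (((a : nat) * M) %% n)%N <= M%:R * \sum_(c : 'I_n) h c.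
Proof.
move=> M0 h0.
case: n => [|n]; first by rewrite !big_ord0 mulr0.
have q_lt : forall a : 'I_n.+1, (((a : nat) * M) %/ n.+1 < M)%N.
  by move=> a; rewrite ltn_divLR // mulnC ltn_pmul2l.
pose g (a : 'I_n.+1) : ('I_M * 'I_n.+1)%type :=
  (Ordinal (q_lt a), Ordinal (ltn_pmod ((a : nat) * M) (ltn0Sn n))).
have ginj : injective g.
  move=> a b [] hq hc; apply: val_inj => /=.
  have : ((a : nat) * M = (b : nat) * M)%N.
    by rewrite (divn_eq (a * M) n.+1) (divn_eq (b * M) n.+1) hq hc.
  by move/eqP; rewrite eqn_pmul2r // => /eqP.
have := @sum_inj _ _ g (fun p => h p.2) ginj (fun p => h0 _).
move=> /le_trans; apply.
rewrite -(pair_big xpredT xpredT (fun (_ : 'I_M) (c : 'I_n.+1) => h c)) /=.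
by rewrite sumr_const card_ord mulr_natl.
Qed.

Lemma count_le (B K : nat) :
  \sum_(j : 'I_B) ((j : nat) <= K)%:R <= (K.+1)%:R :> R.
Proof.
rewrite -(big_mkord xpredT (fun j => (j <= K)%:R : R)).
case: (leqP B K.+1) => hB.
  apply: le_trans (_ : \sum_(0 <= j < B) (1 : R) <= _).
    by apply: ler_sum_nat => j _; case: (j <= K)%N; rewrite ?ler01.
  by rewrite sumr_const_nat subn0 ler_nat.
rewrite (big_cat_nat _ (n := K.+1)) //= ?(ltnW hB) //.
rewrite [X in _ + X]big1_seq ?addr0; last first.
  move=> j /andP[_]; rewrite mem_index_iota => /andP[h _].
  by rewrite leqNgt h.
apply: le_trans (_ : \sum_(0 <= j < K.+1) (1 : R) <= _).
  by apply: ler_sum_nat => j _; case: (j <= K)%N; rewrite ?ler01.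
by rewrite sumr_const_nat subn0.
Qed.

Definition tl (K j : nat) : R := if (K < j)%N then ((j%:R) ^+ 2)^-1 else 0.

Lemma tl_ge0 K j : 0 <= tl K j.
Proof. by rewrite /tl; case: ifP => // _; rewrite invr_ge0 sqr_ge0. Qed.

Lemma tail_sum (K B : nat) : (0 < K)%N ->
  \sum_(j : 'I_B) tl K j <= (K%:R)^-1.
Proof.
move=> K0.
have K0R : (0 : R) < K%:R by rewrite ltr0n.
suff : \sum_(j < B) tl K j <= (K%:R)^-1 - ((maxn K B.-1)%:R)^-1.
  move=> /le_trans; apply; rewrite lerBlDr lerDl invr_ge0 ler0n //.
elim: B => [|B IH].
  by rewrite big_ord0 /= maxn0 subrr.
rewrite big_ord_recr /= [tl K B]/tl.
case: ltnP => hB; last first.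
  rewrite addr0.
  have e : maxn K B.-1 = K by apply/maxn_idPl; lia.
  by rewrite e in IH.
have e : maxn K B.-1 = B.-1 by apply/maxn_idPr; lia.
rewrite e in IH; clear e.
apply: le_trans (lerD IH (lexx _)) _.
case: B hB IH => [|b] hB IH; first lia.
rewrite /= -addrA lerD2l.
have b0 : (0 : R) < b%:R by rewrite ltr0n; lia.
have e : - (b%:R : R)^-1 + ((b.+1%:R) ^+ 2)^-1 =
         - ((b.+1)%:R)^-1 - (b%:R * (b.+1)%:R ^+ 2)^-1.
  rewrite -natr1; field; rewrite ?natr1; apply/andP; split;
    rewrite ?lt0r_neq0 // ?ltr0n // -?natr1 ?pnatr_eq0 //.
rewrite e lerBlDr lerDl invr_ge0 mulr_ge0 ?sqr_ge0 ?ler0n //.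
Qed.
End S5.

Lemma flip_sum (R : realType) n (h : nat -> R) : (forall j, 0 <= h j) ->
  \sum_(c : 'I_n) h (n - c)%N <= \sum_(j : 'I_n.+1) h j.
Proof.
move=> h0.
have lt : forall c : 'I_n, (n - c < n.+1)%N by move=> c; rewrite ltnS leq_subr.
pose g (c : 'I_n) : 'I_n.+1 := Ordinal (lt c).
have ginj : injective g.
  move=> a b [] hab; apply: val_inj => /=.
  have := ltn_ord a; have := ltn_ord b; lia.
exact: (@sum_inj R _ _ g (fun j => h j) ginj (fun j => h0 _)).
Qed.

Lemma sum_sub (R : realType) (I : finType) (P : pred I) (F : I -> R) :
  (forall i, 0 <= F i) -> \sum_(i | P i) F i <= \sum_i F i.
Proof. by move=> F0; rewrite [X in _ <= X](bigID P) /= lerDl sumr_ge0. Qed.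

Theorem corollary6p5 (R : realType) (i : nat) :
  exists P : {poly {poly R}},
    forall n : nat, (2 ^ i < n)%N ->
    forall eps : R, 0 < eps ->
    exists G : {set 'I_n},
      (#|G|%:R <= P.[ln (n%:R), eps^-1]) /\
      l2normsq (fun x => @bit R n i x - frestrict (@bit R n i) G x) < eps%:C%C.
Proof.
set M := (2 ^ i.+1)%N.
have M0 : (0 < M)%N by rewrite expn_gt0.
have M0R : (0 : R) < M%:R by rewrite ltr0n.
exists ((4 * M)%:R%:P + (16 * M ^ 4)%:R *: 'X)%:P.
move=> n hn eps eps0.
have n0 : (0 < n)%N by apply: leq_ltn_trans hn.
set x := 8 * (M%:R : R) ^+ 3 / eps.
have x0 : 0 <= x by rewrite /x divr_ge0 ?mulr_ge0 ?exprn_ge0 // ltW.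
have /andP[xK1 xK2] := truncn_itv x0.
set K := (Num.truncn x).+1.
have K0 : (0 < K)%N by [].
have KR1 : x < K%:R by [].
have KR2 : K%:R <= x + 1 by rewrite /K -natr1 lerD2r.
set cc := fun a : 'I_n => ((a : nat) * M %% n)%N.
set d := fun c : nat => minn c (n - c).
exists [set a : 'I_n | (d (cc a) <= K)%N].
split.
- rewrite hornerC hornerD hornerC hornerZ hornerX.
  have e1 : (#|[set a : 'I_n | (d (cc a) <= K)%N]|%:R : R) =
            \sum_(a : 'I_n) ((d (cc a) <= K)%N%:R : R).
    rewrite -sumr_const big_mkcond /=; apply: eq_bigr => a _.
    by rewrite finset.in_set; case: ifP.
  have e2 : \sum_(a : 'I_n) ((d (cc a) <= K)%N%:R : R) <=
            M%:R * \sum_(c : 'I_n) ((d c <= K)%N%:R : R).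
    exact: (@fiber_sum R n M (fun c => (d c <= K)%N%:R) M0 (fun j => ler0n _ _)).
  have e3 : \sum_(c : 'I_n) ((d c <= K)%N%:R : R) <=
      \sum_(c : 'I_n) (((c : nat) <= K)%N%:R : R) + \sum_(c : 'I_n) ((n - c <= K)%N%:R : R).
    rewrite -big_split; apply: ler_sum => c _; rewrite /d geq_min.
    by case: (c <= K)%N; case: (n - c <= K)%N => /=; rewrite ?addr0 ?add0r ?lerDl ?ler01.
  have e4 := @count_le R n K.
  have e5 : \sum_(c : 'I_n) ((n - c <= K)%N%:R : R) <= K.+1%:R.
    apply: le_trans (@count_le R n.+1 K).
    exact: (@flip_sum R n (fun j => (j <= K)%N%:R) (fun j => ler0n _ _)).
  have ex : (16 * M ^ 4)%:R * eps^-1 = 2 * M%:R * x.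
    by rewrite /x natrM natrX; field; exact: lt0r_neq0.
  rewrite e1 ex natrM; apply: le_trans e2 _.
  set S := \sum_(c : 'I_n) _ in e3 *.
  have hS : S <= 2 * K%:R + 2.
    have := le_trans e3 (lerD e4 e5); rewrite -natr1; lra.
  have h1 : M%:R * S <= M%:R * (2 * K%:R + 2) by apply: ler_wpM2l => //; apply: ltW.
  have h2 : M%:R * K%:R <= M%:R * (x + 1) by apply: ler_wpM2l => //; apply: ltW.
  lra.
- rewrite residual -parseval (bigID (fun a => a \in [set a : 'I_n | (d (cc a) <= K)%N])) /=.
  rewrite addrC addrK.
  under eq_bigr do rewrite mulJ nmE -rmorphXn.
  rewrite -rmorph_sum ltcR.
  set G := [set a : 'I_n | (d (cc a) <= K)%N].
  set F := fun a => fourier (@bit R n i) a.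
  set H := fun c : nat => tl R K c + tl R K (n - c).
  have H0 : forall c, 0 <= H c by move=> c; rewrite addr_ge0 ?tl_ge0.
  have hb : forall a, a \notin G ->
      nm R (F a) ^+ 2 <= 4 * M%:R ^+ 2 * H (cc a).
    move=> a; rewrite finset.in_set -ltnNge => hK.
    have c0 : (0 < cc a)%N by move: hK; rewrite /d; lia.
    have cb := @coef_bound R i n a c0.
    set dd := (d (cc a))%:R : R.
    have dd0 : 0 < dd by rewrite /dd ltr0n; lia.
    have hF : nm R (F a) <= 2 * M%:R / dd by rewrite ler_pdivlMr.
    have F0 : 0 <= nm R (F a) by apply: nm_ge0.
    have hsq : nm R (F a) ^+ 2 <= 4 * M%:R ^+ 2 * (dd ^+ 2)^-1.
      have -> : 4 * M%:R ^+ 2 * (dd ^+ 2)^-1 = (2 * M%:R / dd) ^+ 2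
        by field; exact: lt0r_neq0.
      by rewrite !expr2; apply: ler_pM.
    apply: le_trans hsq _; apply: ler_wpM2l; first by rewrite mulr_ge0 ?sqr_ge0.
    rewrite /H /dd /d /tl.
    case: (leqP (cc a) (n - cc a)) => hc.
      have -> : (K < cc a)%N by move: hK; rewrite /d; lia.
      rewrite lerDl; case: ifP => _ //.
      by rewrite invr_ge0 exprn_ge0 // ler0n.
    have -> : (K < n - cc a)%N by move: hK; rewrite /d; lia.
    rewrite lerDr; case: ifP => _ //.
    by rewrite invr_ge0 exprn_ge0 // ler0n.
  apply: le_lt_trans (_ : _ <= \sum_(a | a \notin G) 4 * M%:R ^+ 2 * H (cc a)) _.
    by apply: ler_sum => a /hb.
  have hsub := @sum_sub R _ (fun a => a \notin G) (fun a => 4 * M%:R ^+ 2 * H (cc a))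
    (fun a => mulr_ge0 (mulr_ge0 (ler0n _ 4) (sqr_ge0 _)) (H0 _)).
  apply: le_lt_trans hsub _.
  rewrite -mulr_sumr.
  have hfs := @fiber_sum R n M H M0 H0.
  have hH : \sum_(c : 'I_n) H c <= (K%:R)^-1 + (K%:R)^-1.
    rewrite big_split /=; apply: lerD; first exact: tail_sum.
    apply: le_trans (@flip_sum R n (tl R K) (tl_ge0 R K)) _.
    exact: tail_sum.
  have K0R : (0 : R) < K%:R by rewrite ltr0n.
  have h4 : 0 <= 4 * M%:R ^+ 2 :> R by rewrite mulr_ge0 ?sqr_ge0.
  apply: le_lt_trans (_ : _ <= 4 * M%:R ^+ 2 * (M%:R * ((K%:R)^-1 + (K%:R)^-1))) _.
    apply: ler_wpM2l => //; apply: le_trans hfs _.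
    by apply: ler_wpM2l => //; apply: ltW.
  have -> : 4 * M%:R ^+ 2 * (M%:R * ((K%:R)^-1 + (K%:R)^-1)) = eps * (x / K%:R).
    by rewrite /x; field; rewrite !lt0r_neq0.
  rewrite -[X in _ < X]mulr1 ltr_pM2l // ltr_pdivrMr // mul1r //.
Qed.
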